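(* Consider the Kudryashov–Sinelshchikov equation $$F:=u_t+uu_x-(1+u)u_{xx}-u_x^2=0$$ for $u=u(t,x)$. Each of the following pairs $(C^1,C^2)$ is a conserved vector for this equation, i.e. $D_tC^1+D_xC^2=0$ holds on every (sufficiently smooth) solution $u$: (1) $C^1=-u_x e^{-t-x}$, $C^2=\big(u_t+(1+u)u_x\big)e^{-t-x}$; (2) $C^1=\big(\tfrac{u^2}{2}-(1+u)u_x\big)e^{-t-x}$, $C^2=\big(-\tfrac{u^2}{2}+(1+u)u_t+(1+u)u_x\big)e^{-t-x}$; (3) $C^1=\big(-(1+u)+\tfrac{t u^2}{2}-t u u_x\big)e^{-t-x}$, $C^2=\big((1+u)+(1+u)u_x+\tfrac{u^2}{2}+t u u_t-\tfrac{t u^2}{2}\big)e^{-t-x}$.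
   Context: $D_t$ and $D_x$ denote the total derivative operators with respect to $t$ and $x$. *)

(* Defs.v *)
From Stdlib Require Import Reals.
From Coquelicot Require Import Coquelicot.
Open Scope R_scope.

Definition p_t (f : R -> R -> R) (t x : R) : R := Derive (fun s => f s x) t.
Definition p_x (f : R -> R -> R) (t x : R) : R := Derive (fun y => f t y) x.

Definition is_C2 (u : R -> R -> R) : Prop :=
  forall t x,
    ex_derive (fun s => u s x) t /\ ex_derive (fun y => u t y) x /\
    ex_derive (fun s => p_t u s x) t /\ ex_derive (fun y => p_t u t y) x /\
    ex_derive (fun s => p_x u s x) t /\ ex_derive (fun y => p_x u t y) x /\
    continuity_2d_pt u t x /\
    continuity_2d_pt (p_t u) t x /\ continuity_2d_pt (p_x u) t x /\
    continuity_2d_pt (p_t (p_t u)) t x /\ continuity_2d_pt (p_x (p_t u)) t x /\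
    continuity_2d_pt (p_t (p_x u)) t x /\ continuity_2d_pt (p_x (p_x u)) t x.

Definition KS_solution (u : R -> R -> R) : Prop :=
  forall t x,
    p_t u t x + u t x * p_x u t x - (1 + u t x) * p_x (p_x u) t x
      - (p_x u t x) ^ 2 = 0.

(* (C1, C2), evaluated along u, is a conserved vector: D_t C1 + D_x C2 = 0.
   Along a given u, the total derivatives D_t, D_x are the partial
   derivatives of the composite functions (t,x) |-> C^i(t,x,u,u_t,u_x,...). *)
Definition conserved (C1 C2 : R -> R -> R) : Prop :=
  forall t x, p_t C1 t x + p_x C2 t x = 0.

Definition C1_1 (u : R -> R -> R) (t x : R) : R :=
  - p_x u t x * exp (- t - x).
Definition C2_1 (u : R -> R -> R) (t x : R) : R :=
  (p_t u t x + (1 + u t x) * p_x u t x) * exp (- t - x).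

Definition C1_2 (u : R -> R -> R) (t x : R) : R :=
  ((u t x) ^ 2 / 2 - (1 + u t x) * p_x u t x) * exp (- t - x).
Definition C2_2 (u : R -> R -> R) (t x : R) : R :=
  (- (u t x) ^ 2 / 2 + (1 + u t x) * p_t u t x + (1 + u t x) * p_x u t x)
    * exp (- t - x).

Definition C1_3 (u : R -> R -> R) (t x : R) : R :=
  (- (1 + u t x) + t * (u t x) ^ 2 / 2 - t * u t x * p_x u t x) * exp (- t - x).
Definition C2_3 (u : R -> R -> R) (t x : R) : R :=
  ((1 + u t x) + (1 + u t x) * p_x u t x + (u t x) ^ 2 / 2
     + t * u t x * p_t u t x - t * (u t x) ^ 2 / 2) * exp (- t - x).

(* Main.v *)
Require Import Defs.
From Stdlib Require Import Reals Lra.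
From Coquelicot Require Import Coquelicot.
Open Scope R_scope.

Lemma mixed u t x : is_C2 u -> p_t (p_x u) t x = p_x (p_t u) t x.
Proof.
  intros H. unfold p_t, p_x. apply Schwarz.
  - exists (mkposreal 1 Rlt_0_1). intros a b _ _.
    destruct (H a b) as (H1&H2&H3&H4&H5&H6&_). tauto.
  - destruct (H t x) as (_&_&_&_&_&_&_&_&_&_&_&K&_). exact K.
  - destruct (H t x) as (_&_&_&_&_&_&_&_&_&_&K&_). exact K.
Qed.

Theorem mainTheorem5 (u : R -> R -> R) :
  is_C2 u -> KS_solution u ->
  conserved (C1_1 u) (C2_1 u) /\
  conserved (C1_2 u) (C2_2 u) /\
  conserved (C1_3 u) (C2_3 u).
Proof.
  intros H KS; split; [|split]; intros t x.
{
  destruct (H t x) as (H1&H2&H3&H4&H5&H6&_).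
  pose proof (mixed u t x H) as M; pose proof (KS t x) as F.
  unfold p_t at 1; unfold p_x at 1.
  erewrite (is_derive_unique (fun s => C1_1 u s x)); [| unfold C1_1; auto_derive; [repeat split; assumption | reflexivity]].
  erewrite (is_derive_unique (fun y => C2_1 u t y)); [| unfold C2_1; auto_derive; [repeat split; assumption | reflexivity]].
  replace (- t + - x) with (- t - x) by ring.
  unfold p_t, p_x in *.
  set (ut := Derive (fun s => u s x) t) in *.
  set (ux := Derive (fun s => u t s) x) in *.
  set (uxt := Derive (fun s => Derive (fun y => u s y) x) t) in *.
  set (utx := Derive (fun s => Derive (fun y => u y s) t) x) in *.
  set (uxx := Derive (fun s => Derive (fun y => u t y) s) x) in *.
  rewrite M.
  replace ut with (- (u t x * ux - (1 + u t x) * uxx - ux ^ 2)) by lra.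
  field.
}
{
  destruct (H t x) as (H1&H2&H3&H4&H5&H6&_).
  pose proof (mixed u t x H) as M; pose proof (KS t x) as F.
  unfold p_t at 1; unfold p_x at 1.
  erewrite (is_derive_unique (fun s => C1_2 u s x)); [| unfold C1_2; auto_derive; [repeat split; assumption | reflexivity]].
  erewrite (is_derive_unique (fun y => C2_2 u t y)); [| unfold C2_2; auto_derive; [repeat split; assumption | reflexivity]].
  replace (- t + - x) with (- t - x) by ring.
  unfold p_t, p_x in *.
  set (ut := Derive (fun s => u s x) t) in *.
  set (ux := Derive (fun s => u t s) x) in *.
  set (uxt := Derive (fun s => Derive (fun y => u s y) x) t) in *.
  set (utx := Derive (fun s => Derive (fun y => u y s) t) x) in *.
  set (uxx := Derive (fun s => Derive (fun y => u t y) s) x) in *.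
  rewrite M.
  replace ut with (- (u t x * ux - (1 + u t x) * uxx - ux ^ 2)) by lra.
  field.
}
{
  destruct (H t x) as (H1&H2&H3&H4&H5&H6&_).
  pose proof (mixed u t x H) as M; pose proof (KS t x) as F.
  unfold p_t at 1; unfold p_x at 1.
  erewrite (is_derive_unique (fun s => C1_3 u s x)); [| unfold C1_3; auto_derive; [repeat split; assumption | reflexivity]].
  erewrite (is_derive_unique (fun y => C2_3 u t y)); [| unfold C2_3; auto_derive; [repeat split; assumption | reflexivity]].
  replace (- t + - x) with (- t - x) by ring.
  unfold p_t, p_x in *.
  set (ut := Derive (fun s => u s x) t) in *.
  set (ux := Derive (fun s => u t s) x) in *.
  set (uxt := Derive (fun s => Derive (fun y => u s y) x) t) in *.
  set (utx := Derive (fun s => Derive (fun y => u y s) t) x) in *.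
  set (uxx := Derive (fun s => Derive (fun y => u t y) s) x) in *.
  rewrite M.
  replace ut with (- (u t x * ux - (1 + u t x) * uxx - ux ^ 2)) by lra.
  field.
}
Qed.
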